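(* Let $D$ be an integral domain and let $T$ be a $t$-Jaffard overring of $D$. Then for every fractional ideal $I$ of $D$ we have $(D:I)T=(T:IT)$.
   Context: $K$ is the quotient field of $D$; an overring is a ring between $D$ and $K$, flat if flat as a $D$-module. For $D$-submodules, $(A:B)=\{x\in K\mid xB\subseteq A\}$. A family $\Theta$ of overrings of $D$ is a $t$-Jaffard family if: either $\Theta=\{K\}$ or $K\notin\Theta$; every $T\in\Theta$ is flat over $D$; $\Theta$ is independent ($TT'=K$ for distinct $T,T'\in\Theta$); $\Theta$ is locally finite (every nonzero $x\in D$ is a nonunit in only finitely many $T\in\Theta$); and $\bigcap_{T\in\Theta}T=D$. A $t$-Jaffard overring is a member of some $t$-Jaffard family of $D$. *)

(* Defs.v *)
From mathcomp Require Import all_boot all_order all_algebra.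
Set Implicit Arguments. Unset Strict Implicit. Unset Printing Implicit Defensive.
Import GRing.Theory.
Local Open Scope ring_scope.

Section Defs.
Variable K : fieldType.

Definition same_set (A B : K -> Prop) : Prop := forall x, A x <-> B x.

Definition is_subring (R : K -> Prop) : Prop :=
  [/\ R 0, R 1,
      (forall x y, R x -> R y -> R (x - y)) &
      (forall x y, R x -> R y -> R (x * y))].

(* D is a (necessarily integral) domain whose quotient field is K *)
Definition domain_with_qf (D : K -> Prop) : Prop :=
  is_subring D /\
  forall x, exists a b, [/\ D a, D b, b != 0 & x = a / b].

Definition overring (D T : K -> Prop) : Prop :=
  is_subring T /\ forall x, D x -> T x.

Definition submodule (D A : K -> Prop) : Prop :=
  [/\ A 0, (forall x y, A x -> A y -> A (x + y)) &
      (forall d x, D d -> A x -> A (d * x))].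

Definition colon (A B : K -> Prop) : K -> Prop :=
  fun x => forall b, B b -> A (x * b).

Definition prodset (A B : K -> Prop) : K -> Prop :=
  fun x => exists n (a b : 'I_n -> K),
    [/\ forall i, A (a i), forall i, B (b i) & x = \sum_(i < n) a i * b i].

Definition fractional_ideal (D I : K -> Prop) : Prop :=
  [/\ submodule D I, (exists x, I x /\ x != 0) &
      exists d, [/\ D d, d != 0 & forall x, I x -> D (d * x)]].

(* flatness of the D-module T (T ⊆ K), via the equational criterion of flatness *)
Definition flat_over (D T : K -> Prop) : Prop :=
  forall n (a x : 'I_n -> K),
    (forall i, D (a i)) -> (forall i, T (x i)) ->
    \sum_(i < n) a i * x i = 0 ->
    exists m (b : 'I_n -> 'I_m -> K) (y : 'I_m -> K),
      [/\ forall i j, D (b i j), forall j, T (y j),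
          forall i, x i = \sum_(j < m) b i j * y j &
          forall j, \sum_(i < n) a i * b i j = 0].

Definition unit_in (T : K -> Prop) (x : K) : Prop := exists y, T y /\ x * y = 1.

Definition t_Jaffard_family (D : K -> Prop) (Th : (K -> Prop) -> Prop) : Prop :=
  (forall T, Th T -> overring D T) /\
  [/\
      ((exists T, Th T) /\ (forall T, Th T -> same_set T (fun _ => True)))
        \/ (forall T, Th T -> ~ same_set T (fun _ => True)),
      (forall T, Th T -> flat_over D T),
      (forall T T', Th T -> Th T' -> ~ same_set T T' -> same_set (prodset T T') (fun _ => True)),
      (forall x, D x -> x != 0 -> exists n (S : 'I_n -> (K -> Prop)),
          forall T, Th T -> ~ unit_in T x -> exists i, same_set T (S i)) &
      (forall x, (forall T, Th T -> T x) <-> D x)].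

Definition t_Jaffard_overring (D T : K -> Prop) : Prop :=
  exists Th, t_Jaffard_family D Th /\ Th T.

End Defs.

(* Main.v *)
Require Import Defs.
From mathcomp Require Import all_boot all_order all_algebra.
From mathcomp Require Import ring.
From Stdlib Require Import Classical.
Set Implicit Arguments. Unset Strict Implicit. Unset Printing Implicit Defensive.
Import GRing.Theory.
Local Open Scope ring_scope.

Lemma sr_add (K : fieldType) (R : K -> Prop) x y : is_subring R -> R x -> R y -> R (x + y).
Proof.
case=> [h0 h1 hB hM] Rx Ry.
have -> : x + y = x - (0 - y) by rewrite sub0r opprK.
exact: (hB _ _ Rx (hB _ _ h0 Ry)).
Qed.

Lemma sr_opp (K : fieldType) (R : K -> Prop) x : is_subring R -> R x -> R (- x).
Proof. case=> [h0 h1 hB hM] Rx; rewrite -sub0r; exact: hB. Qed.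

Lemma sr_mul (K : fieldType) (R : K -> Prop) x y : is_subring R -> R x -> R y -> R (x * y).
Proof. by case=> [h0 h1 hB hM]; apply: hM. Qed.

Lemma sr_sum (K : fieldType) (R : K -> Prop) n (f : 'I_n -> K) :
  is_subring R -> (forall i, R (f i)) -> R (\sum_(i < n) f i).
Proof.
move=> sR Hf; apply: (big_ind R) => //; first by case: sR.
by move=> x y; apply: sr_add.
Qed.

Lemma sm_sum (K : fieldType) (D A : K -> Prop) n (f : 'I_n -> K) :
  submodule D A -> (forall i, A (f i)) -> A (\sum_(i < n) f i).
Proof.
case=> [A0 AD AM] Hf; apply: (big_ind A) => //.
Qed.

Lemma prodset_mono (K : fieldType) (A A' T : K -> Prop) x :
  (forall a, A a -> A' a) -> prodset A T x -> prodset A' T x.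
Proof.
move=> H [n [a [b [Ha Hb ->]]]]; exists n, a, b; split => // i; exact: H.
Qed.

Lemma prodset_same (K : fieldType) (A T T' : K -> Prop) x :
  same_set T T' -> prodset A T x -> prodset A T' x.
Proof.
move=> H [n [a [b [Ha Hb ->]]]]; exists n, a, b; split => // i; exact/H.
Qed.

Lemma prodset1 (K : fieldType) (A T : K -> Prop) a t :
  A a -> T t -> prodset A T (a * t).
Proof.
move=> Aa Tt; exists 1%N, (fun _ => a), (fun _ => t); split => //.
by rewrite big_ord1.
Qed.

Lemma common_den (K : fieldType) (D : K -> Prop) (s : seq K) :
  domain_with_qf D -> exists c, [/\ D c, c != 0 & forall y, y \in s -> D (c * y)].
Proof.
move=> [sD qf]; elim: s => [|y s [c [Dc c0 H]]].
  by exists 1; split => //; [case: sD | rewrite oner_eq0].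
have [a [b [Da Db b0 ->]]] := qf y.
exists (c * b); split.
- exact: sr_mul.
- by rewrite mulf_neq0.
- move=> z; rewrite inE => /orP [/eqP -> | zs].
    have -> : c * b * (a / b) = c * a by rewrite -mulrA [b * _]mulrCA mulfV // mulr1.
    by apply: sr_mul.
  by rewrite mulrAC; apply: sr_mul => //; apply: H.
Qed.

Lemma inter (K : fieldType) (D T A B : K -> Prop) x b t :
  domain_with_qf D -> flat_over D T -> submodule D A ->
  (forall d y, D d -> B y -> B (d * y)) ->
  prodset A T x -> B b -> T t -> x = b * t ->
  prodset (fun y => A y /\ B y) T x.
Proof.
move=> qf fl sA BM [n [a [u [Ha Hu ->]]]] Bb Tt Ex.
have sD : is_subring D by case: qf.
have [c [Dc c0 Hc]] := common_den (b :: [seq a i | i <- enum 'I_n]) qf.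
have Dcb : D (c * b) by apply: Hc; rewrite mem_head.
have Dca : forall i, D (c * a i).
  by move=> i; apply: Hc; rewrite inE map_f ?mem_enum ?orbT.
pose al : 'I_n.+1 -> K := fun k => oapp (fun i => c * a i) (-(c * b)) (unlift ord0 k).
pose X : 'I_n.+1 -> K := fun k => oapp u t (unlift ord0 k).
have alD : forall k, D (al k).
  by move=> k; rewrite /al; case: (unlift ord0 k) => [i|] /=; [exact: Dca | exact: sr_opp].
have XT : forall k, T (X k).
  by move=> k; rewrite /X; case: (unlift ord0 k) => [i|] /=.
have rel : \sum_(k < n.+1) al k * X k = 0.
  rewrite big_ord_recl /al /X unlift_none /=.
  under eq_bigr => i _ do rewrite liftK /= -mulrA.
  by rewrite -mulr_sumr Ex mulNr mulrA addNr.
have [m [be [y [beD yT Xe sumz]]]] := fl _ al X alD XT rel.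
exists m, (fun j => b * be ord0 j), y; split => //.
- move=> j; split; last by rewrite mulrC; apply: BM.
  have := sumz j; rewrite big_ord_recl /al unlift_none /=.
  under eq_bigr => i _ do rewrite liftK /= -mulrA.
  rewrite -mulr_sumr mulNr => /eqP; rewrite addrC subr_eq0 -mulrA => /eqP /(mulfI c0) <-.
  apply: (sm_sum (D := D) (f := fun i => a i * be (lift ord0 i) j)) => // i.
  by case: sA => A0 AD AM; rewrite mulrC; apply: AM.
- rewrite Ex; have := Xe ord0; rewrite /X unlift_none /= => ->.
  by rewrite mulr_sumr; apply: eq_bigr => j _; rewrite mulrA.
Qed.

Lemma sm_colon (K : fieldType) (D A : K -> Prop) (G : seq K) :
  is_subring D -> submodule D A ->
  submodule D (fun a => A a /\ forall g, g \in G -> D (a * g)).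
Proof.
move=> sD [A0 AD AM]; split.
- by split => // g _; rewrite mul0r; case: sD.
- move=> x y [Ax Hx] [Ay Hy]; split; first exact: AD.
  by move=> g gG; rewrite mulrDl; apply: sr_add => //; [apply: Hx | apply: Hy].
- move=> d x Dd [Ax Hx]; split; first exact: AM.
  by move=> g gG; rewrite -mulrA; apply: sr_mul => //; apply: Hx.
Qed.

Lemma seq_colon (K : fieldType) (D T A : K -> Prop) y (G : seq K) :
  domain_with_qf D -> flat_over D T -> overring D T -> submodule D A ->
  (forall g, g \in G -> T (y * g)) -> prodset A T y ->
  prodset (fun a => A a /\ forall g, g \in G -> D (a * g)) T y.
Proof.
move=> qf fl [sT DT] sA; have sD : is_subring D by case: qf.
elim: G => [|g0 G IH] HG HA.
  by apply: prodset_mono HA => a Aa; split.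
have IH' := IH (fun g gG => HG g (mem_behead (s := g0 :: G) gG)) HA.
have BM : forall d z, D d -> D (z * g0) -> D (d * z * g0).
  by move=> d z Dd Dz; rewrite -mulrA; apply: sr_mul.
have H : prodset (fun a => (A a /\ forall g, g \in G -> D (a * g)) /\ D (a * g0)) T y.
  have [g0e|g00] := eqVneq g0 0.
    apply: (inter (B := fun z => D (z * g0)) (b := y) (t := 1) qf fl (sm_colon G sD sA) BM IH').
    - by rewrite g0e mulr0; case: sD.
    - by case: sT.
    - by rewrite mulr1.
  apply: (inter (B := fun z => D (z * g0)) (b := g0^-1) (t := y * g0) qf fl (sm_colon G sD sA) BM IH').
  - by rewrite mulVf //; case: sD.
  - by apply: HG; rewrite mem_head.
  - by rewrite mulrCA mulVf // mulr1.
apply: prodset_mono H => a [[Aa Ha] Ha0]; split => // g.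
by rewrite inE => /orP [/eqP -> | gG] //; apply: Ha.
Qed.

Lemma combine_lists (K : eqType) n (Q : K -> Prop) (P : 'I_n -> seq K -> Prop) :
  (forall i G G', {subset G <= G'} -> P i G -> P i G') ->
  (forall i, exists G, (forall g, g \in G -> Q g) /\ P i G) ->
  exists G, (forall g, g \in G -> Q g) /\ forall i, P i G.
Proof.
move=> Pm HP.
suff: forall m, exists G, (forall g, g \in G -> Q g) /\ forall i : 'I_n, (i < m)%N -> P i G.
  by move=> /(_ n) [G [HQ HG]]; exists G; split => // i; apply: HG.
elim=> [|m [G [HQ HG]]]; first by exists [::]; split.
case: (ltnP m n) => mn; last first.
  exists G; split => // i _; apply: HG; exact: leq_trans (ltn_ord i) mn.
have [G0 [HQ0 HP0]] := HP (Ordinal mn).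
exists (G ++ G0); split.
  by move=> g; rewrite mem_cat => /orP [] ?; [apply: HQ | apply: HQ0].
move=> i; rewrite ltnS leq_eqVlt => /orP [/eqP im | im].
  have -> : i = Ordinal mn by apply: val_inj.
  by apply: Pm HP0 => g gG; rewrite mem_cat gG orbT.
by apply: Pm (HG i im) => g gG; rewrite mem_cat gG.
Qed.

Theorem proposition3p2 (K : fieldType) (D T : K -> Prop) :
  domain_with_qf D -> t_Jaffard_overring D T ->
  forall I : K -> Prop, fractional_ideal D I ->
  same_set (prodset (colon D I) T) (colon T (prodset I T)).
Proof.
move=> qf [Th [[ovr [Hk fl indep lf inter_]] ThT]] I [[I0 IA IM] _ [d [Dd d0 dI]]] x.
have sD : is_subring D by case: qf.
have [sT DT] := ovr T ThT.
split.
  move=> [n [a [u [Ha Hu ->]]]] y [m [b [v [Hb Hv ->]]]].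
  rewrite mulr_suml; apply: sr_sum => // i; rewrite mulr_sumr; apply: sr_sum => // j.
  rewrite mulrACA; apply: sr_mul => //; last exact: sr_mul.
  by apply: DT; apply: Ha.
move=> Hx.
have [p [q [Dp Dq q0 Ex]]] := qf.2 x.
pose s := d * q.
have Ds : D s by apply: sr_mul.
have s0 : s != 0 by rewrite mulf_neq0.
have [nS [S HS]] := lf s Ds s0.
pose Q := fun g => D g /\ T (s^-1 * g).
pose P := fun (i : 'I_nS) (G : seq K) => forall T', Th T' -> same_set T' (S i) ->
   ~ same_set T' T -> prodset (fun c => c \in G) T' 1.
have [G0 [HQ0 HP0]] : exists G, (forall g, g \in G -> Q g) /\ forall i, P i G.
  apply: combine_lists.
    move=> i G G' sub HG T' ThT' e1 e2; apply: prodset_mono (HG T' ThT' e1 e2).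
    by move=> a; apply: sub.
  move=> i.
  case: (classic (exists T1, [/\ Th T1, same_set T1 (S i) & ~ same_set T1 T])); last first.
    move=> nex; exists [::]; split => // T' ThT' e1 e2; exfalso; apply: nex.
    by exists T'.
  move=> [T1 [ThT1 e1 e2]].
  have [sT1 DT1] := ovr T1 ThT1.
  have e2' : ~ same_set T T1 by move=> h; apply: e2 => z; split => /h.
  have := (indep T T1 ThT ThT1 e2' (s^-1)).2 Logic.I.
  move=> [R [t [u [Ht Hu Es]]]].
  have sDD : submodule D D.
    split; [by case: sD | by move=> *; apply: (sr_add sD) | by move=> *; apply: (sr_mul sD)].
  have H1 : forall g, g \in [seq u r | r <- enum 'I_R] -> T1 (1 * g).
    by move=> g /mapP [r _ ->]; rewrite mul1r; apply: Hu.
  have H2 : prodset D T1 1.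
    by rewrite -(mulr1 1); apply: prodset1; case: sD; case: sT1.
  have := seq_colon qf (fl T1 ThT1) (ovr T1 ThT1) sDD H1 H2.
  move=> [k [c [v [Hc Hv E1]]]].
  exists [seq c j | j <- enum 'I_k]; split.
    move=> g /mapP [j _ ->]; split; first by case: (Hc j).
    rewrite Es mulr_suml; apply: sr_sum => // r.
    rewrite -mulrA; apply: sr_mul => //; apply: DT.
    by rewrite mulrC; apply: (Hc j).2; rewrite map_f ?mem_enum.
  move=> T' ThT' e1' e2''.
  have e : same_set T1 T' by move=> z; split => [/e1 /e1'|/e1' /e1].
  apply: prodset_same e _.
  exists k, c, v; split => //.
  by move=> j; rewrite map_f ?mem_enum.
pose G := s :: G0.
have F1 : forall g, g \in G -> T (s^-1 * g).
  move=> g; rewrite inE => /orP [/eqP -> | gG].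
    by rewrite mulVf //; case: sT.
  exact: (HQ0 g gG).2.
have F2 : forall T', Th T' -> ~ same_set T' T -> prodset (fun c => c \in G) T' 1.
  move=> T' ThT' ne.
  case: (classic (unit_in T' s)) => [[w [Tw sw]] | nu].
    by rewrite -sw; apply: prodset1 => //; rewrite mem_head.
  have [i ei] := HS T' ThT' nu.
  apply: prodset_mono (HP0 i T' ThT' ei ne) => c cG.
  by rewrite inE cG orbT.
have sK : submodule D (fun _ => True) by [].
have H1 : prodset (fun _ => True) T s^-1.
  by rewrite -(mulr1 s^-1); apply: prodset1 => //; case: sT.
have := seq_colon qf (fl T ThT) (ovr T ThT) sK F1 H1.
move=> [R [a [t [Ha Ht Es]]]].
have F3 : forall r T', Th T' -> ~ same_set T' T -> T' (a r).
  move=> r T' ThT' ne.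
  have [sT' DT'] := ovr T' ThT'.
  have [k [c [v [Hc Hv E]]]] := F2 T' ThT' ne.
  rewrite -(mulr1 (a r)) E mulr_sumr; apply: sr_sum => // j.
  by rewrite mulrA; apply: sr_mul => //; apply: DT'; apply: (Ha r).2.
pose A := fun z => forall T', Th T' -> ~ same_set T' T -> forall i, I i -> T' (z * i).
have sA : submodule D A.
  split.
  - by move=> T' ThT' _ i _; rewrite mul0r; case: (ovr T' ThT') => [[]].
  - move=> y z Ay Az T' ThT' ne i Ii; rewrite mulrDl.
    by apply: sr_add; [case: (ovr T' ThT') | apply: Ay | apply: Az].
  - move=> e y De Ay T' ThT' ne i Ii; rewrite -mulrA.
    have [sT' DT'] := ovr T' ThT'.
    by apply: sr_mul => //; [apply: DT' | apply: Ay].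
have HA : prodset A T x.
  exists R, (fun r => d * a r), (fun r => t r * p); split.
  - move=> r T' ThT' ne i Ii.
    have [sT' DT'] := ovr T' ThT'.
    rewrite mulrAC; apply: (sr_mul sT'); [apply: DT'; exact: (dI i Ii) | exact: F3].
  - by move=> r; apply: sr_mul => //; apply: DT.
  - have -> : \sum_(r < R) d * a r * (t r * p) = (d * p) * \sum_(r < R) a r * t r.
      by rewrite mulr_sumr; apply: eq_bigr => r _; ring.
    rewrite -Es Ex /s; field.
    by rewrite d0 q0.
have BM : forall e y, D e -> colon T I y -> colon T I (e * y).
  by move=> e y De Hy i Ii; rewrite -mulrA; apply: sr_mul => //; [apply: DT | apply: Hy].
have Bx : colon T I x.
  move=> i Ii; apply: Hx; rewrite -(mulr1 i); apply: prodset1 => //; by case: sT.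
have T1 : T 1 by case: sT.
have HH := inter (b := x) (t := 1) qf (fl T ThT) sA BM HA Bx T1 (esym (mulr1 x)).
apply: (prodset_mono _ HH) => z [Az Bz] i Ii.
apply: (proj1 (inter_ (z * i))) => T' ThT'.
case: (classic (same_set T' T)) => [e | ne].
  by apply/e; apply: Bz.
exact: Az.
Qed.
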